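(* Fix a constant $\Delta$. Let $\mathcal{G}$ be one of the following graph families: (i) all graphs of maximum degree at most $\Delta$; (ii) all trees of maximum degree at most $\Delta$; (iii) all cycles (in which case $\Delta=2$). Let $d(n)=n$ if $\Delta\le 2$ and $d(n)=\log n$ otherwise. Then there is no LCL problem $\Pi$ defined on $\mathcal{G}$ whose mending radius is between $\omega(1)$ and $o(d(n))$; that is, if $\Pi$ is $T$-mendable on $\mathcal{G}$ for some function $T$ with $T(n)=o(d(n))$, then $\Pi$ is $T'$-mendable on $\mathcal{G}$ for some constant function $T'$.
   Context: A locally verifiable problem $\Pi$ on a graph family $\mathcal{G}$ is given by a set $\Sigma$ of input labels, a set $\Gamma$ of output labels and a verifier $\psi$ with verification radius $r\in\mathbb{N}$: for a graph $G=(V,E)\in\mathcal{G}$ with input labeling $\sigma:V\to\Sigma$, an output labeling $\lambda:V\to\Gamma$ and a node $v$, $\psi(G,\lambda,v)\in\{\text{happy},\text{unhappy}\}$ depends only on the radius-$r$ neighborhood of $v$ (structure, inputs and outputs, up to isomorphism). $\lambda$ is a solution if $\psi$ is happy at every node. $\Pi$ is an LCL problem if $\Sigma,\Gamma$ are finite and all graphs in $\mathcal{G}$ have maximum degree bounded by a constant. Partial labelings are maps $\lambda:V\to\Gamma\cup\{\bot\}$; the relaxed verifier $\psi^*$ is happy at $v$ if some node within distance $r$ of $v$ has label $\bot$, and otherwise $\psi^*(G,\lambda,v)=\psi(G,\lambda',v)$ for any $\lambda':V\to\Gamma$ agreeing with $\lambda$ on the radius-$r$ neighborhood of $v$; $\psi^*$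 accepts $\lambda$ if it is happy at all nodes. Given $\lambda$ accepted by $\psi^*$ and a node $v$, a $t$-mend of $\lambda$ at $v$ is a partial labeling $\mu$ such that $\psi^*$ accepts $\mu$, $\mu(v)\neq\bot$, $\mu(u)=\bot$ implies $\lambda(u)=\bot$, and $\mu(u)\neq\lambda(u)$ implies $u$ is within distance $t$ of $v$. A verifier $\psi$ is $T$-mendable ($T:\mathbb{N}\to\mathbb{N}$) if for every $G\in\mathcal{G}$ with $n$ nodes, every partial labeling $\lambda$ accepted by $\psi^*$ and every node $v$, a $T(n)$-mend of $\lambda$ at $v$ exists. $\Pi$ is $T$-mendable if for some $r$ there is a radius-$r$ verifier for $\Pi$ (accepting exactly the solutions of $\Pi$) that is $T$-mendable. *)

(* Defs.v *)
From mathcomp Require Import all_boot.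
Set Implicit Arguments. Unset Strict Implicit. Unset Printing Implicit Defensive.

Definition simple_graph (n : nat) (adj : rel 'I_n) : Prop :=
  symmetric adj /\ irreflexive adj.

Definition deg (n : nat) (adj : rel 'I_n) (v : 'I_n) : nat := #|[pred u | adj v u]|.

Definition max_deg_le (D : nat) (n : nat) (adj : rel 'I_n) : Prop :=
  forall v, deg adj v <= D.

Definition connected (n : nat) (adj : rel 'I_n) : Prop :=
  forall u v : 'I_n, connect adj u v.

Definition acyclic (n : nat) (adj : rel 'I_n) : Prop :=
  forall s : seq 'I_n, 2 < size s -> uniq s -> ~~ cycle adj s.

Fixpoint ball (n : nat) (adj : rel 'I_n) (v : 'I_n) (t : nat) : 'I_n -> bool :=
  match t with
  | 0 => fun u => u == v
  | t'.+1 => fun u => ball adj v t' u || [exists w, ball adj v t' w && adj w u]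
  end.

Definition graph_family := forall n : nat, rel 'I_n -> Prop.

Inductive family_kind := BoundedDegree | BoundedDegreeTrees | Cycles.

Definition graph_class (k : family_kind) (D : nat) : graph_family :=
  fun n adj =>
    match k with
    | BoundedDegree => simple_graph adj /\ max_deg_le D adj
    | BoundedDegreeTrees =>
        simple_graph adj /\ max_deg_le D adj /\ connected adj /\ acyclic adj
    | Cycles =>
        simple_graph adj /\ 3 <= n /\ connected adj /\ (forall v, deg adj v = 2)
    end.

(* A problem with input labels S and output labels G is given by its set of
   solutions: sol n adj sigma lambda. *)
Definition problem (S G : finType) :=
  forall n : nat, rel 'I_n -> ('I_n -> S) -> ('I_n -> G) -> Prop.

Definition verifier (S G : finType) :=
  forall n : nat, rel 'I_n -> ('I_n -> S) -> ('I_n -> G) -> 'I_n -> bool.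

(* (adj1,s1,l1,v1) and (adj2,s2,l2,v2) have isomorphic radius-r neighbourhoods
   (induced subgraph on the ball, with input and output labels, rooted). *)
Definition ball_iso (S G : finType) (r : nat)
    (n1 : nat) (adj1 : rel 'I_n1) (s1 : 'I_n1 -> S) (l1 : 'I_n1 -> G) (v1 : 'I_n1)
    (n2 : nat) (adj2 : rel 'I_n2) (s2 : 'I_n2 -> S) (l2 : 'I_n2 -> G) (v2 : 'I_n2)
    : Prop :=
  exists (f : 'I_n1 -> 'I_n2) (g : 'I_n2 -> 'I_n1),
    [/\ f v1 = v2,
        (forall u, ball adj1 v1 r u -> ball adj2 v2 r (f u) /\ g (f u) = u),
        (forall w, ball adj2 v2 r w -> ball adj1 v1 r (g w) /\ f (g w) = w),
        (forall u u', ball adj1 v1 r u -> ball adj1 v1 r u' ->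
                      adj2 (f u) (f u') = adj1 u u')
      & (forall u, ball adj1 v1 r u -> s2 (f u) = s1 u /\ l2 (f u) = l1 u)].

Definition is_local (S G : finType) (F : graph_family) (r : nat) (psi : verifier S G)
  : Prop :=
  forall n1 (adj1 : rel 'I_n1) s1 l1 v1 n2 (adj2 : rel 'I_n2) s2 l2 v2,
    F n1 adj1 -> F n2 adj2 ->
    ball_iso r adj1 s1 l1 v1 adj2 s2 l2 v2 ->
    psi n1 adj1 s1 l1 v1 = psi n2 adj2 s2 l2 v2.

Definition verifies (S G : finType) (F : graph_family) (psi : verifier S G)
    (Pi : problem S G) : Prop :=
  forall n (adj : rel 'I_n) s l, F n adj ->
    (Pi n adj s l <-> forall v, psi n adj s l v).

(* Pi is an LCL problem on F (S, G finite by typing; bounded degree is part of F) *)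
Definition is_LCL (S G : finType) (F : graph_family) (Pi : problem S G) : Prop :=
  exists r (psi : verifier S G), is_local F r psi /\ verifies F psi Pi.

(* Partial labelings: None stands for bottom. Relaxed verifier psi^*. *)
Definition relaxed_happy (S G : finType) (r : nat) (psi : verifier S G)
    n (adj : rel 'I_n) (s : 'I_n -> S) (l : 'I_n -> option G) (v : 'I_n) : Prop :=
  (exists u, ball adj v r u /\ l u = None) \/
  (forall l' : 'I_n -> G, (forall u, ball adj v r u -> l u = Some (l' u)) ->
     psi n adj s l' v).

Definition relaxed_accepts (S G : finType) (r : nat) (psi : verifier S G)
    n (adj : rel 'I_n) (s : 'I_n -> S) (l : 'I_n -> option G) : Prop :=
  forall v, relaxed_happy r psi adj s l v.

Definition is_mend (S G : finType) (r : nat) (psi : verifier S G)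
    n (adj : rel 'I_n) (s : 'I_n -> S) (l mu : 'I_n -> option G) (v : 'I_n) (t : nat)
    : Prop :=
  [/\ relaxed_accepts r psi adj s mu,
      mu v <> None,
      (forall u, mu u = None -> l u = None)
    & (forall u, mu u <> l u -> ball adj v t u)].

Definition verifier_mendable (S G : finType) (F : graph_family) (r : nat)
    (psi : verifier S G) (T : nat -> nat) : Prop :=
  forall n (adj : rel 'I_n) (s : 'I_n -> S) (l : 'I_n -> option G) (v : 'I_n),
    F n adj -> relaxed_accepts r psi adj s l ->
    exists mu, is_mend r psi adj s l mu v (T n).

Definition mendable (S G : finType) (F : graph_family) (Pi : problem S G)
    (T : nat -> nat) : Prop :=
  exists r (psi : verifier S G),
    [/\ is_local F r psi, verifies F psi Pi & verifier_mendable F r psi T].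

Definition dfun (D : nat) (n : nat) : nat := if D <= 2 then n else trunc_log 2 n.

Definition little_o (T d : nat -> nat) : Prop :=
  forall c, 0 < c -> exists N, forall n, N <= n -> c * T n <= d n.

(* Main.v *)
Require Import Defs.
From mathcomp Require Import all_boot.
From mathcomp Require Import zify.
Set Implicit Arguments. Unset Strict Implicit. Unset Printing Implicit Defensive.

Section Balls.
Variables (n : nat) (adj : rel 'I_n).

Lemma ball_center v t : ball adj v t v.
Proof. elim: t => [|t IH] /=; [exact: eqxx | by rewrite IH]. Qed.

Lemma ball_mono v a b u : a <= b -> ball adj v a u -> ball adj v b u.
Proof.
move=> /subnK <-; elim: (b - a) => [|k IH] //= H. by rewrite IH.
Qed.

Lemma ball_trans v a x j y : ball adj v a x -> ball adj x j y -> ball adj v (a + j) y.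
Proof.
move=> Hx; elim: j y => [|j IH] y /=.
  by move/eqP->; rewrite addn0.
rewrite addnS /=. case/orP => [/IH -> //| /existsP [w /andP [Hw Hwy]]].
apply/orP; right; apply/existsP; exists w; by rewrite IH.
Qed.

Lemma ball_sym (sym : symmetric adj) x j y : ball adj x j y -> ball adj y j x.
Proof.
elim: j x y => [|j IH] x y /=; first by move/eqP->; rewrite eqxx.
case/orP => [/IH -> //| /existsP [w /andP [Hw Hwy]]].
have H1 : ball adj y 1 w.
  rewrite /= orbC; apply/orP; left; apply/existsP; exists y; by rewrite eqxx sym.
have := ball_trans H1 (IH _ _ Hw). by rewrite add1n.
Qed.

End Balls.

Lemma ball_fwd n1 n2 (adj1 : rel 'I_n1) (adj2 : rel 'I_n2) (f : 'I_n1 -> 'I_n2) v K :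
  (forall u u', ball adj1 v K u -> ball adj1 v K u' -> adj1 u u' -> adj2 (f u) (f u')) ->
  forall a x j y, a + j <= K -> ball adj1 v a x -> ball adj1 x j y -> ball adj2 (f x) j (f y).
Proof.
move=> Hadj a x j y; elim: j y => [|j IH] y Hle Hx /=.
  by move/eqP->.
case/orP => [Hy| /existsP [w /andP [Hw Hwy]]].
  by rewrite IH //; lia.
apply/orP; right; apply/existsP; exists (f w); rewrite IH //; last by lia.
apply: Hadj => //.
  apply: (ball_mono (a := a + j)); first by lia.
  exact: ball_trans Hx Hw.
apply: (ball_mono (a := a + j.+1)); first by lia.
apply: ball_trans Hx _ => /=; apply/orP; right; apply/existsP; exists w; by rewrite Hw.
Qed.


Section Transfer.
Variables (S G : finType) (F : graph_family) (r : nat) (psi : verifier S G).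
Hypothesis loc : is_local F r psi.
Variables (n : nat) (adj : rel 'I_n) (n0 : nat) (adjH : rel 'I_n0).
Hypotheses (FG : @F n adj) (FH : @F n0 adjH) (symG : symmetric adj).
Variables (f : 'I_n -> 'I_n0) (g : 'I_n0 -> 'I_n) (v : 'I_n) (t : nat).
Let K := t + 3 * r.
Let L := t + 2 * r.
Hypothesis hf : forall u u', ball adj v K u -> ball adj v K u' -> adj u u' -> adjH (f u) (f u').
Hypothesis hg : forall w w', ball adjH (f v) K w -> ball adjH (f v) K w' -> adjH w w' -> adj (g w) (g w').
Hypothesis gf : forall u, ball adj v K u -> g (f u) = u.
Hypothesis fg : forall w, ball adjH (f v) K w -> f (g w) = w.

Lemma locE x sH lH' s l x' : ball_iso r adj s l x adjH sH lH' x' ->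
  psi adj s l x = psi adjH sH lH' x'.
Proof. move=> H; exact: (loc FG FH H). Qed.

Lemma gfv : g (f v) = v.
Proof. by rewrite gf // ball_center. Qed.

Lemma fwdG a x j y : a + j <= K -> ball adj v a x -> ball adj x j y -> ball adjH (f x) j (f y).
Proof. move=> H1 H2 H3; exact: (ball_fwd hf H1 H2 H3). Qed.

Lemma bwdH a x j y : a + j <= K -> ball adjH (f v) a x -> ball adjH x j y -> ball adj (g x) j (g y).
Proof. move=> H1 H2 H3; exact: (ball_fwd hg H1 H2 H3). Qed.

Lemma inKG a x : a <= K -> ball adj v a x -> ball adj v K x.
Proof. move=> H; exact: ball_mono. Qed.

Lemma fvH a x : a <= K -> ball adj v a x -> ball adjH (f v) a (f x).
Proof. move=> H Hx; apply: (@fwdG 0) => //; exact: ball_center. Qed.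

Lemma gvG a w : a <= K -> ball adjH (f v) a w -> ball adj v a (g w).
Proof. move=> H Hx; rewrite -gfv; apply: (@bwdH 0) => //; exact: ball_center. Qed.

Lemma adj_eq u u' : ball adj v K u -> ball adj v K u' -> adjH (f u) (f u') = adj u u'.
Proof.
move=> Hu Hu'; apply/idP/idP; last exact: hf.
move=> H; rewrite -(gf Hu) -(gf Hu'); apply: hg => //; exact: fvH.
Qed.

Lemma iso_at a x (s : 'I_n -> S) (l : 'I_n -> G) (sH : 'I_n0 -> S) (lH : 'I_n0 -> G) :
  a + r <= K -> ball adj v a x ->
  (forall u, ball adj x r u -> sH (f u) = s u /\ lH (f u) = l u) ->
  ball_iso r adj s l x adjH sH lH (f x).
Proof.
move=> Har Hx Hlab; exists f, g; split => //.
- move=> u Hu; split; first exact: (fwdG Har Hx).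
  apply: gf; apply: (@inKG (a + r)) => //; exact: ball_trans Hx Hu.
- move=> w Hw.
  have Hfx : ball adjH (f v) a (f x) by apply: fvH => //; lia.
  have Hxx : g (f x) = x by apply: gf; apply: (@inKG a) => //; lia.
  split; first by rewrite -{1}Hxx; exact: (bwdH Har Hfx Hw).
  apply: fg; apply: (@ball_mono _ _ _ (a + r)) => //; exact: ball_trans Hfx Hw.
- move=> u u' Hu Hu'; apply: adj_eq; apply: (@inKG (a + r)) => //; exact: ball_trans Hx _.
Qed.

Lemma transfer (s : 'I_n -> S) (l : 'I_n -> option G) :
  relaxed_accepts r psi adj s l ->
  (forall lH : 'I_n0 -> option G, relaxed_accepts r psi adjH (fun j => s (g j)) lH ->
     exists muH, is_mend r psi adjH (fun j => s (g j)) lH muH (f v) t) ->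
  exists mu, is_mend r psi adj s l mu v t.
Proof.
move=> acc mendH.
pose lH j := if ball adjH (f v) L j then l (g j) else None.
have accH : relaxed_accepts r psi adjH (fun j => s (g j)) lH.
  move=> i.
  case: (boolP [exists w, ball adjH i r w && (lH w == None)]) =>
     [/existsP [w /andP [Hw /eqP Hn]]| Hall].
    by left; exists w.
  have Hall' : forall w, ball adjH i r w -> lH w <> None.
    move=> w Hw Hn; apply: (negP Hall); apply/existsP; exists w; by rewrite Hw Hn.
  have HiL : ball adjH (f v) L i.
    have := Hall' i (ball_center _ _ _); rewrite /lH; by case: ifP.
  have HxL : ball adj v L (g i) by apply: gvG => //; rewrite /L /K; lia.
  have fx : f (g i) = i by apply: fg; apply: (ball_mono (a := L)) => //; rewrite /L /K; lia.
  case: (acc (g i)) => [[y [Hy Hly]] | Hr].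
    left; exists (f y); split.
      by rewrite -{1}fx; apply: (fwdG (a := L)) => //; rewrite /L /K; lia.
    rewrite /lH; case: ifP => // _; rewrite gf //.
    by apply: (@inKG (L + r)); [rewrite /L /K; lia | exact: ball_trans HxL Hy].
  right => lH' Hext.
  pose l' y := if ball adj (g i) r y then lH' (f y) else lH' i.
  have Hp : psi adj s l' (g i).
    apply: Hr => y Hy; rewrite /l' Hy.
    have Hfy : ball adjH i r (f y) by rewrite -{1}fx; apply: (fwdG (a := L)) => //; rewrite /L /K; lia.
    have := Hext _ Hfy; rewrite /lH; case: ifP => // _; rewrite gf //.
    by apply: (@inKG (L + r)); [rewrite /L /K; lia | exact: ball_trans HxL Hy].
  have Hiso : ball_iso r adj s l' (g i) adjH (fun j => s (g j)) lH' (f (g i)).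
    apply: (iso_at (a := L)) => //; first by rewrite /L /K; lia.
    move=> u Hu; split; first by rewrite gf //; apply: (@inKG (L + r)); [rewrite /L /K; lia | exact: ball_trans HxL Hu].
    by rewrite /l' Hu.
  by rewrite -fx -(locE Hiso).
have [muH [accM HmuV HmuN HmuD]] := mendH lH accH.
pose mu y := if ball adj v t y then muH (f y) else l y.
exists mu; split.
- move=> x.
  case: (boolP (ball adj v (t + r) x)) => Hx.
    have Hfx : ball adjH (f v) (t + r) (f x) by apply: fvH => //; rewrite /K; lia.
    have Hxx : g (f x) = x by apply: gf; apply: (@inKG (t + r)) => //; rewrite /K; lia.
    have Hgw : forall w, ball adjH (f x) r w -> ball adj x r (g w) /\ f (g w) = w /\ ball adj v L (g w).
      move=> w Hw; have H1 : ball adj x r (g w) by rewrite -{1}Hxx; apply: (bwdH _ Hfx Hw); rewrite /K; lia.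
      split => //; split; last by have := ball_trans Hx H1; rewrite /L -addnA addnn -mul2n.
      apply: fg; apply: (@ball_mono _ _ _ (t + r + r)); first by rewrite /K; lia.
      exact: ball_trans Hfx Hw.
    case: (accM (f x)) => [[w [Hw Hn]] | Hr].
      left; exists (g w); have [H1 [H2 H3]] := Hgw w Hw; split => //.
      rewrite /mu; case: ifP => _; first by rewrite H2.
      have := HmuN _ Hn; rewrite /lH -H2 fvH //; last by rewrite /L /K; lia.
    right => l' Hext.
    pose lH' j := if ball adjH (f x) r j then l' (g j) else l' x.
    have Hp : psi adjH (fun j => s (g j)) lH' (f x).
      apply: Hr => w Hw; have [H1 [H2 H3]] := Hgw w Hw.
      rewrite /lH' Hw; have := Hext _ H1; rewrite /mu; case: ifP => Ht; first by rewrite H2.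
      move=> <-; case: (muH w =P lH w) => [->|/HmuD Hb]; last first.
        by move: Ht; rewrite (gvG _ Hb) //; rewrite /K; lia.
      by rewrite /lH -H2 fvH // ?H2 //; rewrite /L /K; lia.
    have Hiso : ball_iso r adj s l' x adjH (fun j => s (g j)) lH' (f x).
    apply: (iso_at (a := t + r)) => //; first by rewrite /K; lia.
    move=> u Hu; rewrite gf; last by apply: (@inKG (t + r + r)); [rewrite /K; lia| exact: ball_trans Hx Hu].
    split => //; rewrite /lH' (fwdG (a := t + r)) //; last by rewrite /K; lia.
    by rewrite gf //; apply: (@inKG (t + r + r)); [rewrite /K; lia| exact: ball_trans Hx Hu].
    by rewrite (locE Hiso).
  have Hfar : forall y, ball adj x r y -> ~~ ball adj v t y.
    move=> y Hy; apply/negP => Hvy; move: Hx; rewrite (ball_trans Hvy) //; exact: ball_sym.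
  case: (acc x) => [[y [Hy Hly]] | Hr].
    by left; exists y; rewrite /mu (negbTE (Hfar y Hy)).
  right => l' Hext; apply: Hr => y Hy; rewrite -Hext // /mu (negbTE (Hfar y Hy)) //.
- by rewrite /mu ball_center.
- move=> u; rewrite /mu; case: ifP => // Hu /HmuN; rewrite /lH fvH ?gf //; try (rewrite /L /K; lia).
  + by apply: (@inKG t) => //; rewrite /K; lia.
  + by apply: (@ball_mono _ _ _ t) => //; rewrite /L; lia.
- by move=> u; rewrite /mu; case: ifP.
Qed.

End Transfer.


Lemma connect_map (T T' : finType) (e : rel T) (e' : rel T') (h : T -> T') :
  (forall x y, e x y -> e' (h x) (h y)) -> forall x y, connect e x y -> connect e' (h x) (h y).
Proof.
move=> He x y /connectP [p Hp ->]; apply/connectP; exists (map h p); last by rewrite last_map.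
elim: p x Hp => //= z p IH x /andP [Hxz Hp]; by rewrite He // IH.
Qed.

Definition restr n (adj : rel 'I_n) (W : {set 'I_n}) : rel 'I_n :=
  fun a b => [&& a \in W, b \in W & adj a b].

Definition Inv n (adj : rel 'I_n) (W : {set 'I_n}) (v : 'I_n) : Prop :=
  forall x, x \in W -> connect (restr adj W) x v.

Lemma restr_mono n (adj : rel 'I_n) (A B : {set 'I_n}) x y :
  A \subset B -> connect (restr adj A) x y -> connect (restr adj B) x y.
Proof.
move=> sAB; have := @connect_map _ _ (restr adj A) (restr adj B) id; apply.
by move=> a b /and3P [Ha Hb Hab]; rewrite /restr (subsetP sAB _ Ha) (subsetP sAB _ Hb).
Qed.

Lemma Inv_ball n (adj : rel 'I_n) (sym : symmetric adj) v K :
  Inv adj [set u | ball adj v K u] v.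
Proof.
have H : forall t u, t <= K -> ball adj v t u -> connect (restr adj [set u | ball adj v K u]) u v.
  elim => [|t IH] u Ht /=; first by move/eqP->; exact: connect0.
  case/orP => [Hu | /existsP [w /andP [Hw Hwu]]]; first by apply: IH => //; lia.
  apply: connect_trans (IH w _ Hw); last by lia.
  apply: connect1; rewrite /restr !inE sym Hwu andbT.
  rewrite (ball_mono (a := t) _ Hw) ?andbT; last by lia.
  apply: (ball_mono (a := t.+1)) => //=; first by rewrite orbC; apply/orP; left; apply/existsP; exists w; rewrite Hw.
by move=> x; rewrite inE => Hx; apply: (H K).
Qed.

Lemma exists_out n (W : {set 'I_n}) : #|W| < n -> exists y, y \notin W.
Proof.
move=> Hc; case: (pickP [pred y | y \notin W]) => [y Hy | Hn]; first by exists y.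
suff : W = setT by move=> E; move: Hc; rewrite E cardsT card_ord ltnn.
apply/setP => y; rewrite inE; by have := Hn y => /= /negbFE.
Qed.

Lemma grow n (adj : rel 'I_n) (sym : symmetric adj) (b : bool) (A : {set 'I_n}) v :
  (b -> connected adj) -> v \in A -> (b -> Inv adj A v) ->
  forall k, #|A| <= k <= n ->
  exists W : {set 'I_n}, [/\ A \subset W, #|W| = k & (b -> Inv adj W v)].
Proof.
move=> Hconn vA HA k /andP [Hk Hkn].
suff H : forall m, m + #|A| <= n ->
    exists W : {set 'I_n}, [/\ A \subset W, #|W| = m + #|A| & (b -> Inv adj W v)].
  by have := H (k - #|A|); rewrite subnK //; apply.
clear Hk Hkn; elim => [|m IH] Hkn; first by exists A; split.
have [W [sAW cW IW]] := IH (ltnW Hkn).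
have Hout : exists y, [&& y \notin W & (b ==> [exists x, (x \in W) && adj x y])].
  have [y0 Hy0] : exists y, y \notin W by apply: exists_out; rewrite cW; lia.
  case: b Hconn IW HA IH => Hconn IW HA IH /=; last by exists y0; rewrite Hy0.
  case: (pickP [pred y | (y \notin W) && [exists x, (x \in W) && adj x y]]) => [y Hy | Hn].
    by exists y.
  exfalso.
  have cl : closed adj (mem W).
    apply: intro_closed; first exact: sym_connect_sym.
    move=> x y Hxy Hx; apply/negPn/negP => Hy.
    have := Hn y; rewrite /= Hy /= => /negbT /negP; apply; apply/existsP; exists x; by rewrite Hx.
  have := closed_connect cl (Hconn is_true_true v y0).
  by rewrite (subsetP sAW _ vA) (negbTE Hy0).
have [y /andP [Hy Hyb]] := Hout.
exists (y |: W); split.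
- by apply: subset_trans sAW _; apply/subsetP => q Hq; rewrite inE Hq orbT.
- by rewrite cardsU1 Hy cW; lia.
- move=> Hb x; rewrite !inE => /orP [/eqP -> | Hx].
    move: Hyb; rewrite Hb /= => /existsP [z /andP [Hx Hxy]].
    apply: connect_trans (restr_mono _ (IW Hb z Hx)); last by apply/subsetP => q Hq; rewrite inE Hq orbT.
    by apply: connect1; rewrite /restr !inE eqxx Hx orbT sym Hxy.
  by apply: restr_mono (IW Hb x Hx); apply/subsetP => q Hq; rewrite inE Hq orbT.
Qed.

Section Induced.
Variables (n : nat) (adj : rel 'I_n) (W : {set 'I_n}) (n0 : nat) (E : #|W| = n0) (v : 'I_n) (vW : v \in W).

Definition hI (i : 'I_n0) : 'I_n := enum_val (cast_ord (esym E) i).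
Definition fI (x : 'I_n) : 'I_n0 := cast_ord E (enum_rank_in vW x).
Definition adjI : rel 'I_n0 := fun i j => adj (hI i) (hI j).

Lemma hI_in i : hI i \in W.
Proof. exact: enum_valP. Qed.

Lemma fIK x : x \in W -> hI (fI x) = x.
Proof. by move=> Hx; rewrite /hI /fI cast_ordK enum_rankK_in. Qed.

Lemma hIK i : fI (hI i) = i.
Proof. by rewrite /hI /fI enum_valK_in cast_ordKV. Qed.

Lemma hI_inj : injective hI.
Proof. by move=> i j H; rewrite -(hIK i) H hIK. Qed.

Lemma adjI_sym : symmetric adj -> symmetric adjI.
Proof. by move=> sym i j; rewrite /adjI sym. Qed.

Lemma adjI_irr : irreflexive adj -> irreflexive adjI.
Proof. by move=> irr i; rewrite /adjI irr. Qed.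

Lemma adjI_deg D : max_deg_le D adj -> max_deg_le D adjI.
Proof.
move=> Hd i; apply: leq_trans (Hd (hI i)); rewrite /deg.
rewrite -(card_imset (mem [pred j | adjI i j]) hI_inj).
apply: subset_leq_card; apply/subsetP => u /imsetP [j Hj ->]; exact: Hj.
Qed.

Lemma adjI_acyclic : acyclic adj -> acyclic adjI.
Proof.
move=> Hac s Hs Hu; have := Hac (map hI s); rewrite size_map (map_inj_uniq hI_inj) cycle_map.
by apply.
Qed.

Lemma adjI_conn : symmetric adj -> Inv adj W v -> connected adjI.
Proof.
move=> sym HI i j.
have Hc : forall i, connect adjI i (fI v).
  move=> i'; rewrite -{1}(hIK i'); apply: connect_map (HI _ (hI_in i')).
  by move=> a b /and3P [Ha Hb Hab]; rewrite /adjI !fIK.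
apply: connect_trans (Hc i) _; rewrite (sym_connect_sym (adjI_sym sym)); exact: Hc.
Qed.

End Induced.


Lemma card_union_seq (T T' : finType) (N : T -> {set T'}) (s : seq T) c :
  (forall w, w \in s -> #|N w| <= c) ->
  #|[set u | has (fun w => u \in N w) s]| <= size s * c.
Proof.
elim: s => [|w s IH] Hc /=.
  by rewrite (eq_card0 (A := [set u | false])) // => u; rewrite inE.
have -> : [set u | (u \in N w) || has (fun w0 => u \in N w0) s] =
          N w :|: [set u | has (fun w0 => u \in N w0) s].
  by apply/setP => u; rewrite !inE.
apply: leq_trans (leq_card_setU _ _) _.
rewrite mulSn leq_add // ?Hc ?mem_head // IH // => z Hz; apply: Hc; by rewrite in_cons Hz orbT.
Qed.

Lemma ballS n (adj : rel 'I_n) v t u :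
  ball adj v t.+1 u = ball adj v t u || [exists w, ball adj v t w && adj w u].
Proof. by []. Qed.
Lemma ball0 n (adj : rel 'I_n) v u : ball adj v 0 u = (u == v).
Proof. by []. Qed.
Opaque ball.

Section BallSize.
Variables (n : nat) (adj : rel 'I_n) (sym : symmetric adj) (D : nat) (Hd : max_deg_le D adj) (v : 'I_n).

Definition Bs t := [set u | ball adj v t u].
Definition Sph t := Bs t.+1 :\: Bs t.
Lemma Bs_in t u : (u \in Bs t) = ball adj v t u.
Proof. by rewrite inE. Qed.
Lemma Sph_in t u : (u \in Sph t) = ~~ ball adj v t u && ball adj v t.+1 u.
Proof. by rewrite in_setD !Bs_in. Qed.

Lemma Sph0 : #|Sph 0| <= D.
Proof.
apply: leq_trans (Hd v); apply: subset_leq_card; apply/subsetP => u.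
rewrite Sph_in inE ballS ball0 => /andP [Hn /orP [H | /existsP [w /andP [/eqP -> Hw]]]] //.
by rewrite H in Hn.
Qed.

Lemma SphS t : #|Sph t.+1| <= #|Sph t| * D.-1.
Proof.
pose N w := [set u | adj w u & u \notin Bs t.+1].
have sub : Sph t.+1 \subset [set u | has (fun w => u \in N w) (enum (Sph t))].
  apply/subsetP => u; rewrite Sph_in inE (ballS _ _ t.+1) => /andP [Hn /orP [H | /existsP [w /andP [Hw Hwu]]]].
    by rewrite H in Hn.
  apply/hasP; exists w; last by rewrite inE Hwu Bs_in Hn.
  rewrite mem_enum Sph_in Hw andbT; apply/negP => Hwt; apply: (negP Hn).
  by rewrite ballS orbC; apply/orP; left; apply/existsP; exists w; rewrite Hwt.
apply: leq_trans (subset_leq_card sub) _; rewrite [#|Sph t|]cardE.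
apply: card_union_seq => w; rewrite mem_enum Sph_in ballS => /andP [Hwt /orP [H | /existsP [p /andP [Hp Hpw]]]].
  by rewrite H in Hwt.
have sub2 : N w \subset [set u | adj w u] :\ p.
  apply/subsetP => u; rewrite !inE => /andP [Hwu Hu]; rewrite Hwu andbT.
  apply/negP => /eqP Hup; move: Hu; rewrite Hup ballS Hp.
  done.
apply: leq_trans (subset_leq_card sub2) _.
have := cardsD1 p [set u | adj w u]; rewrite !inE sym Hpw /= => Hc.
have := Hd w; rewrite /deg.
have -> : #|[pred u | adj w u]| = #|[set u | adj w u]| by apply: eq_card => u; rewrite inE.
move=> Hx; rewrite Hc in Hx; rewrite -subn1; lia.
Qed.

Lemma Sph_bound t : #|Sph t| <= D * (maxn 1 D.-1) ^ t.
Proof.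
elim: t => [|t IH]; first by rewrite expn0 muln1 Sph0.
apply: leq_trans (SphS t) _; rewrite expnS mulnCA mulnC.
apply: leq_mul => //; by rewrite leq_maxr.
Qed.

Lemma Bs_bound t : #|Bs t| <= 1 + t * (D * (maxn 1 D.-1) ^ t).
Proof.
elim: t => [|t IH].
  rewrite mul0n addn0; apply: leq_trans (subset_leq_card (B := [set v]) _) _; last by rewrite cards1.
  by apply/subsetP => u; rewrite Bs_in ball0 inE.
have sub : Bs t.+1 \subset Bs t :|: Sph t.
  by apply/subsetP => u; rewrite in_setU Sph_in !Bs_in ballS; case: (ball adj v t u).
apply: leq_trans (subset_leq_card sub) _; apply: leq_trans (leq_card_setU _ _) _.
have H1 := Sph_bound t.
have H2 : (maxn 1 D.-1) ^ t <= (maxn 1 D.-1) ^ t.+1 by apply: leq_pexp2l => //; rewrite leq_maxl.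
have H3 : D * (maxn 1 D.-1) ^ t <= D * (maxn 1 D.-1) ^ t.+1 by apply: leq_mul.
have H4 : t * (D * (maxn 1 D.-1) ^ t) <= t * (D * (maxn 1 D.-1) ^ t.+1) by apply: leq_mul.
rewrite mulSn; lia.
Qed.

End BallSize.


Definition cadj (m a b : nat) : bool :=
  [|| a.+1 == b, b.+1 == a, (a == 0) && (b.+1 == m) | (b == 0) && (a.+1 == m)].

Definition adjC m : rel 'I_m := fun i j => cadj m i j.
Arguments adjC : clear implicits.

Section StdCycle.
Variable m' : nat.
Local Notation m := m'.+1.
Hypothesis m3 : 3 <= m.

Lemma adjC_sym : symmetric (adjC m).
Proof. move=> i j; rewrite /adjC /cadj; lia. Qed.

Lemma adjC_irr : irreflexive (adjC m).
Proof. move=> i; rewrite /adjC /cadj; have := ltn_ord i; lia. Qed.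

Lemma adjC_deg i : deg (adjC m) i = 2.
Proof.
have Hi := ltn_ord i.
pose a : 'I_m := inord (if i.+1 == m then 0 else i.+1).
pose b : 'I_m := inord (if (i : nat) == 0 then m.-1 else i.-1).
have Ha : (a : nat) = (if i.+1 == m then 0 else i.+1) by rewrite /a inordK //; case: ifP; lia.
have Hb : (b : nat) = (if (i : nat) == 0 then m.-1 else i.-1) by rewrite /b inordK //; case: ifP; lia.
rewrite /deg (eq_card (B := pred2 a b)); last first.
  move=> j; rewrite !inE /= /adjC /cadj -!val_eqE /= Ha Hb; have := ltn_ord j.
  case: ifP; case: ifP; lia.
rewrite card2 -val_eqE /= Ha Hb; case: ifP; case: ifP; lia.
Qed.

Lemma adjC_conn : connected (adjC m).
Proof.
have H : forall i : 'I_m, connect (adjC m) i ord0.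
  move=> i; move Hk : (i : nat) => k; elim: k i Hk => [|k IH] i Hk.
    by have -> : i = ord0 by apply: val_inj.
  have Hk' : k < m by have := ltn_ord i; rewrite Hk; lia.
  apply: connect_trans (IH (inord k) _); last by rewrite inordK.
  by apply: connect1; rewrite /adjC /cadj inordK //; lia.
move=> i j; apply: connect_trans (H i) _.
by rewrite (sym_connect_sym adjC_sym).
Qed.

Lemma adjC_class : graph_class Cycles 2 (adjC m).
Proof.
split; first by split; [exact: adjC_sym | exact: adjC_irr].
by split => //; split; [exact: adjC_conn | exact: adjC_deg].
Qed.

Lemma ballC t (i : 'I_m) : ball (adjC m) ord0 t i = (i <= t) || (m <= i + t).
Proof.
have Hi := ltn_ord i.
elim: t i Hi => [|t IH] i Hi.
  by rewrite ball0 -val_eqE /=; lia.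
rewrite ballS IH //; apply/idP/idP.
  case/orP => [H | /existsP [j /andP [Hj Hji]]]; first by lia.
  move: Hj Hji; rewrite IH // /adjC /cadj; have := ltn_ord j; lia.
move=> H; case: (boolP ((i <= t) || (m <= i + t))) => [H1|Hn]; first by apply/orP; left.
apply/orP; right; apply/existsP.
case: (boolP (i == t.+1 :> nat)) => Hit.
  exists (inord t); rewrite IH ?inordK /adjC /cadj ?inordK; lia.
case: (boolP (i.+1 < m)) => Him.
  exists (inord i.+1); rewrite IH ?inordK /adjC /cadj ?inordK; lia.
exists ord0; rewrite IH /adjC /cadj /=; lia.
Qed.

End StdCycle.

Definition al (m m0 K x : nat) := if x <= K then x else m0 - (m - x).

Section Alpha.
Variables (m' m0' K : nat).
Local Notation m := m'.+1.
Local Notation m0 := m0'.+1.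
Hypotheses (Hm : 2 * K + 2 <= m) (Hm0 : 2 * K + 2 <= m0).

Definition alpha (i : 'I_m) : 'I_m0 := inord (al m m0 K i).

Lemma alpha_val (i : 'I_m) : (i <= K) || (m <= i + K) -> (alpha i : nat) = al m m0 K i.
Proof. move=> H; have Hi := ltn_ord i; rewrite /alpha /al inordK //; case: ifP; lia. Qed.

Lemma alpha_ball (i : 'I_m) : (i <= K) || (m <= i + K) -> (alpha i <= K) || (m0 <= alpha i + K).
Proof. move=> H; rewrite alpha_val // /al; have := ltn_ord i; case: ifP; lia. Qed.

Lemma alpha_adj (i j : 'I_m) : (i <= K) || (m <= i + K) -> (j <= K) || (m <= j + K) ->
  cadj m i j -> cadj m0 (alpha i) (alpha j).
Proof.
move=> Hi Hj; rewrite /cadj !alpha_val // /al; have := ltn_ord i; have := ltn_ord j.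
case: ifP; case: ifP; lia.
Qed.

End Alpha.

Lemma alphaK m' m0' K (i : 'I_m'.+1) : 2 * K + 2 <= m'.+1 -> 2 * K + 2 <= m0'.+1 ->
  (i <= K) || (m'.+1 <= i + K) -> @alpha m0' m' K (@alpha m' m0' K i) = i.
Proof.
move=> H1 H2 Hi; apply: val_inj; rewrite /= alpha_val //; last by apply: alpha_ball.
rewrite alpha_val // /al; have := ltn_ord i; case: ifP; case: ifP; lia.
Qed.


Section CycleStruct.
Variables (n : nat) (adj : rel 'I_n).
Hypotheses (sym : symmetric adj) (irr : irreflexive adj) (conn : connected adj)
  (deg2 : forall x, deg adj x = 2) (n3 : 3 <= n).

Lemma nbr_exists x y : adj y x -> exists z, adj y z && (z != x).
Proof.
move=> Hyx; case: (pickP [pred z | adj y z && (z != x)]) => [z Hz | Hn]; first by exists z.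
have : #|[pred z | adj y z]| <= #|pred1 x|.
  apply: subset_leq_card; apply/subsetP => z; rewrite !inE => Hz.
  by apply/negPn/negP => Hzx; have := Hn z; rewrite /= Hz Hzx.
by rewrite card1 -/(deg adj y) deg2.
Qed.

Lemma two_nbrs y a b z : adj y a -> adj y b -> a != b -> adj y z -> (z == a) || (z == b).
Proof.
move=> Ha Hb Hab Hz; apply/negPn/negP => Hn.
have : #|z |: [set a; b]| <= #|[pred u | adj y u]|.
  apply: subset_leq_card; apply/subsetP => u; rewrite !inE.
  by case/orP => [/eqP -> | /orP [/eqP -> | /eqP ->]].
rewrite -/(deg adj y) deg2 cardsU1 cards2 Hab !inE.
by move: Hn; case: (z == a); case: (z == b).
Qed.

Variables (v u1 : 'I_n) (Hu1 : adj v u1).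

Definition other (x y : 'I_n) : 'I_n := odflt x [pick z | adj y z && (z != x)].

Lemma other_adj x y : adj y x -> adj y (other x y) && (other x y != x).
Proof.
move=> H; rewrite /other; case: pickP => [z Hz //| Hn] /=.
have [z Hz] := nbr_exists H; by have := Hn z; rewrite Hz.
Qed.

Definition step (pr : 'I_n * 'I_n) := (pr.2, other pr.1 pr.2).
Definition p i := (iter i step (v, u1)).1.

Lemma p0 : p 0 = v. Proof. by []. Qed.
Lemma p1 : p 1 = u1. Proof. by []. Qed.
Lemma pSS i : p i.+2 = other (p i) (p i.+1).
Proof. by []. Qed.

Lemma p_adj i : adj (p i) (p i.+1).
Proof.
elim: i => [|i IH]; first by [].
rewrite pSS; have := other_adj (x := p i) (y := p i.+1); rewrite sym IH => /(_ isT) /andP [] //.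
Qed.

Lemma p_ne2 i : p i.+2 != p i.
Proof. rewrite pSS; have := other_adj (x := p i) (y := p i.+1); rewrite sym p_adj => /(_ isT) /andP [] //. Qed.

Lemma p_ne2' i : p i != p i.+2.
Proof. by rewrite eq_sym p_ne2. Qed.

Lemma p_adj' i : adj (p i.+1) (p i).
Proof. by rewrite sym p_adj. Qed.

Definition injOn j := forall i1 i2, i1 < j -> i2 < j -> p i1 = p i2 -> i1 = i2.

Lemma rep j i : injOn j -> i < j -> p j = p i -> i = 0.
Proof.
move=> Hinj; case: i => [//|i] Hij Hp.
case: (ltngtP j i.+2) => Hj; first by lia.
  case: j Hinj Hij Hp Hj => [|j] Hinj Hij Hp Hj; first by [].
  have Hi2 : i.+2 <= j by lia.
  have H := two_nbrs (p_adj' i) (p_adj i.+1) (p_ne2' _).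
  have := p_adj j; rewrite Hp sym => /H /orP [/eqP E | /eqP E].
    have := Hinj _ _ _ _ E; lia.
  have := Hinj _ _ _ _ E; move=> Ej; have Ej' : j = i.+2 by apply: Ej; lia.
  by move: Hp; rewrite Ej' => /eqP; rewrite (negbTE (p_ne2 i.+1)).
by move: (p_adj i.+1); rewrite -Hj Hp irr.
Qed.

Lemma closed_rep j : injOn j -> p j = v -> 0 < j -> n <= j.
Proof.
move=> Hinj Hpj Hj0.
have Hj2 : 2 <= j.
  case: j Hinj Hpj Hj0 => [|[|j]] // _ Hpj _.
  by move: (p_adj 0); rewrite Hpj p0 irr.
pose Sset := [set p k | k : 'I_j].
have inS : forall k, k < j -> p k \in Sset.
  by move=> k Hk; apply/imsetP; exists (Ordinal Hk).
have cl : closed adj (mem Sset).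
  apply: intro_closed; first exact: sym_connect_sym.
  move=> x y Hxy /imsetP [[k Hk] _ Ex]; rewrite Ex /= in Hxy; clear Ex x.
  case: k Hk Hxy => [|k] Hk Hxy.
    have Hne : p 1 != p j.-1.
      apply/eqP => E; case: (ltngtP j 2) => Hj; first by lia.
        by have := Hinj _ _ _ _ E; lia.
      by move: (p_ne2 0); rewrite -Hj Hpj p0 eqxx.
    have Hlast : adj (p 0) (p j.-1).
      by rewrite p0 -Hpj; have := p_adj' j.-1; rewrite prednK //; lia.
    case/orP: (two_nbrs (p_adj 0) Hlast Hne Hxy) => /eqP ->; apply: inS; lia.
  case/orP: (two_nbrs (p_adj' k) (p_adj k.+1) (p_ne2' _) Hxy) => /eqP ->; first by apply: inS; lia.
  case: (ltngtP k.+2 j) => Hk2; [by apply: inS | by lia | by rewrite Hk2 Hpj -p0; apply: inS; lia].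
have allS : forall y, y \in Sset.
  move=> y; rewrite -(closed_connect cl (conn v y)) -p0; apply: inS; lia.
have : #|Sset| <= j by apply: leq_trans (leq_imset_card _ _) _; rewrite card_ord.
have -> : Sset = setT by apply/setP => y; rewrite allS inE.
by rewrite cardsT card_ord.
Qed.

Lemma p_inj : injOn n.
Proof.
suff H : forall j, j <= n -> injOn j by apply: H.
elim => [|j IH] Hj; first by move=> i1 i2.
have Hinj := IH (ltnW Hj).
have Hnew : forall i, i < j -> p j = p i -> False.
  move=> i Hi Hp; have Hi0 := rep Hinj Hi Hp; rewrite Hi0 p0 in Hp.
  have := closed_rep Hinj Hp; lia.
move=> i1 i2 H1 H2 E.
case: (ltngtP i1 j) => Hi1; case: (ltngtP i2 j) => Hi2; try lia.
- exact: Hinj.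
- by exfalso; apply: (Hnew i1) => //; rewrite E Hi2.
- by exfalso; apply: (Hnew i2) => //; rewrite -E Hi1.
Qed.

Definition phi (i : 'I_n) : 'I_n := p i.

Lemma phi_inj : injective phi.
Proof. move=> i j E; apply: val_inj; exact: (p_inj (ltn_ord i) (ltn_ord j) E). Qed.

Lemma p_n : p n = v.
Proof.
have [psi phiK psiK] := injF_bij phi_inj.
have := psiK (p n); rewrite /phi => E.
have := rep p_inj (ltn_ord (psi (p n))) (esym E) => H0.
by rewrite -E H0.
Qed.

Lemma phi_adj (i j : 'I_n) : adj (phi i) (phi j) = adjC n i j.
Proof.
have Hi := ltn_ord i; have Hj := ltn_ord j.
pose a := if i.+1 == n then 0 else i.+1.
pose b := if (i : nat) == 0 then n.-1 else i.-1.
have Ha : adj (p i) (p a).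
  rewrite /a; case: ifP => [/eqP E | _]; last exact: p_adj.
  by have := p_adj i; rewrite E p_n -{1}p0.
have Hb : adj (p i) (p b).
  rewrite /b; case: ifP => [/eqP E | E'].
    rewrite E p0 -{1}p_n; have := p_adj' n.-1; rewrite prednK; [done | lia].
  have := p_adj' i.-1; rewrite prednK; [done | move: E'; lia].
have Han : a < n by rewrite /a; case: ifP; lia.
have Hbn : b < n by rewrite /b; case: ifP; lia.
have Haf : ((i.+1 == n) && (a == 0)) || ((i.+1 != n) && (a == i.+1)) by rewrite /a; case: ifP; lia.
have Hbf : (((i : nat) == 0) && (b == n.-1)) || (((i : nat) != 0) && (b == i.-1)) by rewrite /b; case: ifP; lia.
clearbody a b.
have Hab : p a != p b.
  apply/eqP => E; have := p_inj Han Hbn E; lia.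
rewrite /phi; apply/idP/idP.
  move/(two_nbrs Ha Hb Hab) => /orP [/eqP E | /eqP E];
  [have := p_inj (ltn_ord j) Han E | have := p_inj (ltn_ord j) Hbn E];
  rewrite /adjC /cadj; lia.
rewrite /adjC /cadj => H.
have : (j : nat) = a \/ (j : nat) = b by lia.
by case => ->.
Qed.

End CycleStruct.


Lemma cycle_embed n (adj : rel 'I_n) (HG : graph_class Cycles 2 adj) m0' K (v : 'I_n) :
  2 * K + 2 <= n -> 2 * K + 2 <= m0'.+1 -> 3 <= m0'.+1 ->
  exists (f : 'I_n -> 'I_m0'.+1) (g : 'I_m0'.+1 -> 'I_n),
  [/\ f v = ord0,
   (forall u u', ball adj v K u -> ball adj v K u' -> adj u u' -> adjC _ (f u) (f u')),
   (forall w w', ball (adjC _) (f v) K w -> ball (adjC _) (f v) K w' -> adjC _ w w' -> adj (g w) (g w')),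
   (forall u, ball adj v K u -> g (f u) = u)
  & (forall w, ball (adjC _) (f v) K w -> f (g w) = w)].
Proof.
case: HG => [[sym irr] [n3 [conn deg2]]].
case: n adj v sym irr n3 conn deg2 => [|n'] adj v sym irr n3 conn deg2 Hn Hm0 n3'; first by [].
have [u1 Hu1] : exists u, adj v u.
  case: (pickP [pred u | adj v u]) => [u Hu | Hn0]; first by exists u.
  by have := deg2 v; rewrite /deg (eq_card0 Hn0).
pose ph := phi adj v u1.
have phi_adjE := phi_adj sym irr conn deg2 n3 Hu1.
have [ps phK psK] := injF_bij (phi_inj sym irr conn deg2 n3 Hu1).
have ph0 : ph ord0 = v by [].
have ps0 : ps v = ord0 by rewrite -ph0 phK.
have ballG : forall x, ball adj v K x -> ball (adjC _) ord0 K (ps x).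
  move=> x Hx; rewrite -ps0; apply: (@ball_fwd _ _ adj (adjC _) ps v K _ 0) => //; last exact: ball_center.
  by move=> a b _ _ Hab; rewrite -phi_adjE !psK.
have ballH : forall w : 'I_m0'.+1, ball (adjC _) ord0 K w -> (w <= K) || (m0'.+1 <= w + K).
  by move=> w; rewrite (ballC n3').
have ballG' : forall x, ball adj v K x -> (ps x <= K) || (n'.+1 <= ps x + K).
  by move=> x /ballG; rewrite (ballC n3).
pose f x := @alpha n' m0' K (ps x).
pose g w := ph (@alpha m0' n' K w).
have fv : f v = ord0.
  apply: val_inj; rewrite /f ps0 /= alpha_val //.
have Hn'' : 2 * K + 2 <= n'.+1 by [].
exists f, g; split => //.
- move=> u u' Hu Hu' Huu; rewrite /f /adjC; apply: alpha_adj => //; try exact: ballG'.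
  by have := phi_adjE (ps u) (ps u'); rewrite /ph !psK Huu.
- rewrite fv => w w' Hw Hw' Hww; rewrite /g -/ph.
  have := phi_adjE (@alpha m0' n' K w) (@alpha m0' n' K w'); rewrite -/ph => ->.
  by apply: alpha_adj => //; apply: ballH.
- by move=> u Hu; rewrite /g /f alphaK // ?psK //; apply: ballG'.
- rewrite fv => w Hw; rewrite /f /g /ph phK alphaK //; exact: ballH.
Qed.


Lemma expn_mono m1 m2 e : m1 <= m2 -> m1 ^ e <= m2 ^ e.
Proof. move=> H; elim: e => [|e IH] //; rewrite !expnS leq_mul //. Qed.

Lemma pow_bound D K : 1 <= D -> K * (D * (maxn 1 D.-1) ^ K) < 2 ^ ((D + 1) * (K + 1)).
Proof.
move=> HD.
have h1 : maxn 1 D.-1 <= D by lia.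
have h2 : (maxn 1 D.-1) ^ K <= D ^ K by apply: expn_mono.
have h3 : D <= 2 ^ D by apply: ltnW; apply: ltn_expl.
have h4 : D ^ (K + 1) <= 2 ^ (D * (K + 1)) by rewrite expnM; apply: expn_mono.
have h5 : D * (maxn 1 D.-1) ^ K <= D ^ (K + 1) by rewrite addn1 expnS leq_mul.
have h6 : K < 2 ^ K by apply: ltn_expl.
have pos : 0 < 2 ^ (D * (K + 1)) by rewrite expn_gt0.
apply: (leq_ltn_trans (leq_mul (leqnn K) (leq_trans h5 h4))).
apply: (leq_trans (n := 2 ^ K * 2 ^ (D * (K + 1)))); first by rewrite ltn_pmul2r.
rewrite -expnD leq_exp2l //; lia.
Qed.

Lemma exists_n0 D T r : little_o T (dfun D) ->
  exists n0, [/\ 3 <= n0,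
    1 + (T n0 + 3 * r) * (D * (maxn 1 D.-1) ^ (T n0 + 3 * r)) <= n0
  & (D <= 2 -> 2 * (T n0 + 3 * r) + 2 <= n0)].
Proof.
move=> Hlo; case: (leqP D 2) => HD.
  have [N HN] := Hlo 4 isT.
  pose n0 := maxn N (12 * r + 4).
  have H1 := HN n0 (leq_maxl _ _); rewrite /dfun HD in H1.
  have H2 : 12 * r + 4 <= n0 by apply: leq_maxr.
  exists n0; split; [lia | | move=> _; lia].
  have -> : maxn 1 D.-1 = 1 by lia.
  rewrite exp1n muln1; set K := T n0 + 3 * r.
  have : K * D <= K * 2 by apply: leq_mul.
  rewrite /K; lia.
have [N HN] := Hlo (2 * (D + 1)) ltac:(lia).
pose E := 2 * (D + 1) * (3 * r + 1).
pose n0 := maxn N (2 ^ E).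
have H1 := HN n0 (leq_maxl _ _); rewrite /dfun ifN in H1; last by rewrite -ltnNge.
have H2 : 2 ^ E <= n0 by apply: leq_maxr.
have HE : 8 <= E by rewrite /E; nia.
have HEl : E < 2 ^ E by apply: ltn_expl.
have Hy : E <= trunc_log 2 n0 by apply: trunc_log_max.
have Hp : 2 ^ trunc_log 2 n0 <= n0 by apply: trunc_logP => //; lia.
exists n0; split; [lia | | lia].
set K := T n0 + 3 * r.
have HK : (D + 1) * (K + 1) <= trunc_log 2 n0 by rewrite /K /E in H1 Hy *; nia.
have := pow_bound K (ltnW (ltnW HD)).
have H := @leq_exp2l 2 ((D + 1) * (K + 1)) (trunc_log 2 n0) isT; rewrite -H in HK.
lia.
Qed.


Lemma class_sym k D n (adj : rel 'I_n) : graph_class k D adj -> symmetric adj.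
Proof. by case: k => [[[]]|[[]]|[[]]]. Qed.

Lemma induced_embed n (adj : rel 'I_n) (symG : symmetric adj) D (Hmax : max_deg_le D adj)
  (b : bool) (Hconn : b -> connected adj) K (v : 'I_n) n0 :
  1 + K * (D * (maxn 1 D.-1) ^ K) <= n0 -> n0 <= n ->
  exists (W : {set 'I_n}) (cW : #|W| = n0) (vW : v \in W),
  [/\ (b -> Inv adj W v),
   (forall u u', ball adj v K u -> ball adj v K u' -> adj u u' -> adjI adj cW (fI cW vW u) (fI cW vW u')),
   (forall w w', ball (adjI adj cW) (fI cW vW v) K w -> ball (adjI adj cW) (fI cW vW v) K w' ->
      adjI adj cW w w' -> adj (hI cW w) (hI cW w')),
   (forall u, ball adj v K u -> hI cW (fI cW vW u) = u)
  & (forall w, ball (adjI adj cW) (fI cW vW v) K w -> fI cW vW (hI cW w) = w)].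
Proof.
move=> Hb Hn.
pose A := Bs adj v K.
have vA : v \in A by rewrite Bs_in ball_center.
have cA : #|A| <= n0 := leq_trans (Bs_bound symG Hmax v K) Hb.
have [W [sAW cW IW]] := grow symG Hconn vA (fun _ => @Inv_ball _ _ symG v K) (k := n0) (introT andP (conj cA Hn)).
have vW : v \in W := subsetP sAW _ vA.
exists W, cW, vW; split => //.
- move=> u u' Hu Hu' Huu; rewrite /adjI !fIK //; apply: (subsetP sAW); by rewrite Bs_in.
- move=> u Hu; rewrite fIK //; apply: (subsetP sAW); by rewrite Bs_in.
- move=> w _; exact: hIK.
Qed.

Lemma embed k D n (adj : rel 'I_n) (FG : graph_class k D adj) (Hk : k = Cycles -> D = 2)
   K (v : 'I_n) n0 :
  3 <= n0 -> 1 + K * (D * (maxn 1 D.-1) ^ K) <= n0 -> (D <= 2 -> 2 * K + 2 <= n0) -> n0 <= n ->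
  exists (adjH : rel 'I_n0) (f : 'I_n -> 'I_n0) (g : 'I_n0 -> 'I_n),
  [/\ graph_class k D adjH,
   (forall u u', ball adj v K u -> ball adj v K u' -> adj u u' -> adjH (f u) (f u')),
   (forall w w', ball adjH (f v) K w -> ball adjH (f v) K w' -> adjH w w' -> adj (g w) (g w')),
   (forall u, ball adj v K u -> g (f u) = u)
  & (forall w, ball adjH (f v) K w -> f (g w) = w)].
Proof.
move=> Hn03 Hb Hc Hn.
have symG := class_sym FG.
case: k FG Hk => FG Hk.
- have [[sym irr] Hmax] := FG.
  have [W [cW [vW [IW hf hg gf fg]]]] := @induced_embed _ _ symG _ Hmax false (fun H => False_ind _ (notF H)) K v n0 Hb Hn.
  exists (adjI adj cW), (fI cW vW), (hI cW); split => //.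
  split; [split; [exact: adjI_sym sym | exact: adjI_irr irr] | exact: (adjI_deg cW vW Hmax)].
- have [[sym irr] [Hmax [conn ac]]] := FG.
  have [W [cW [vW [IW hf hg gf fg]]]] := @induced_embed _ _ symG _ Hmax true (fun _ => conn) K v n0 Hb Hn.
  exists (adjI adj cW), (fI cW vW), (hI cW); split => //.
  split; first by split; [exact: adjI_sym sym | exact: adjI_irr irr].
  split; first exact: (adjI_deg cW vW Hmax).
  split; [exact: (adjI_conn cW vW sym (IW isT)) | exact: (adjI_acyclic cW vW ac)].
- have HD := Hk erefl; subst D.
  case: n0 Hn03 Hb Hc Hn => [|m0'] Hn03 Hb Hc Hn; first by [].
  have HK := Hc isT.
  have [f [g [fv hf hg gf fg]]] := cycle_embed FG v (leq_trans HK Hn) HK Hn03.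
  exists (adjC _), f, g; split => //; exact: adjC_class.
Qed.

Theorem theorem8p1 (D : nat) (k : family_kind) (S G : finType)
    (Pi : problem S G) (T : nat -> nat) :
  (k = Cycles -> D = 2) ->
  is_LCL (graph_class k D) Pi ->
  little_o T (dfun D) ->
  mendable (graph_class k D) Pi T ->
  exists c : nat, mendable (graph_class k D) Pi (fun _ => c).
Proof.
move=> Hk _ Hlo [r [psi [loc ver mendT]]].
have [n0 [Hn03 Hb Hc]] := exists_n0 r Hlo.
exists (\max_(i < n0.+1) T i), r, psi; split => //.
move=> n adj s l v FG acc.
have Tle : forall m, m <= n0 -> T m <= \max_(i < n0.+1) T i.
  move=> m Hm; have Hm' : m < n0.+1 by [].
  by have := @leq_bigmax _ (fun i : 'I_n0.+1 => T (nat_of_ord i)) (Ordinal Hm').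
have mono : forall mu t1 t2, t1 <= t2 -> is_mend r psi adj s l mu v t1 -> is_mend r psi adj s l mu v t2.
  move=> mu t1 t2 H [a b c d]; split => // u Hu; exact: ball_mono H (d u Hu).
case: (leqP n n0) => Hn.
  have [mu Hmu] := mendT n adj s l v FG acc; exists mu; exact: mono _ _ _ (Tle n Hn) Hmu.
have [adjH [f [g [FH hf hg gf fg]]]] := embed (K := T n0 + 3 * r) FG Hk v Hn03 Hb Hc (ltnW Hn).
have [mu Hmu] := transfer (t := T n0) loc FG FH (class_sym FG) hf hg gf fg acc
  (fun lH accH => mendT n0 adjH _ lH (f v) FH accH).
exists mu; exact: mono _ _ _ (Tle n0 (leqnn _)) Hmu.
Qed.
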